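(* Let $n\geq 2$ and let $L'_n$ be the graph of the $\alpha,\omega$-dicyclobutadieno derivative of $[n-1]$-phenylene (defined in the context). Then the base polynomial counting distances between pairs consisting of a degree-2 vertex and a degree-3 vertex of $L'_n$ is \begin{eqnarray*} H^{2,3}_{b}(L'_{n}) &=& 4nx+4\sum_{k=2}^{n-1}(n-k+2)x^{3k-2}+4\sum_{k=1}^{n-1}(2n-2k)x^{3k-1}\\ &&+4\sum_{k=1}^{n-1}(n-k)x^{3k}+4x^{3n-2}. \end{eqnarray*}
   Context: All graphs are finite, simple and connected; $d(u,v)$ denotes the shortest-path distance and $d_u$ the degree of a vertex $u$. For a graph $G$ and degrees $p\le q$, the base polynomial is $H^{p,q}_{b}(G)=\sum x^{d(u,v)}$, where the sum runs over all unordered pairs $\{u,v\}$ of distinct vertices of $G$ such that one of $u,v$ has degree $p$ and the other has degree $q$. Construction of $L'_n$ ($n\ge 2$): take $n-1$ hexagons $H_1,\dots,H_{n-1}$, hexagon $H_i$ being the 6-cycle $a_i b_i c_i d_i e_i f_i a_i$, and for $i=1,\dots,n-2$ add edges $b_i f_{i+1}$ and $c_i e_{i+1}$ (so consecutive hexagons are joined by the 4-cycle $b_i c_i e_{i+1} f_{i+1}$). Then add four new vertices $p,q,r,s$ with edges $pq$, $pf_1$, $qe_1$ (forming the 4-cycle $f_1 e_1 q p$) and $rs$, $rb_{n-1}$, $sc_{n-1}$ (forming the 4-cycle $b_{n-1} c_{n-1} s r$). Thus $L'_n$ has $n-1$ hexagons and $n$ squares, $2n+2$ vertices of degree 2 and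 $4n-4$ vertices of degree 3. *)

(* Defs.v *)
From mathcomp Require Import all_boot all_order all_algebra.
Set Implicit Arguments. Unset Strict Implicit. Unset Printing Implicit Defensive.
Import GRing.Theory.
Local Open Scope ring_scope.

Section Generic.
Variable T : finType.
Variable e : rel T.

Definition deg (u : T) : nat := #|[pred v | e u v]|.

Definition walk_len (k : nat) (u v : T) : bool :=
  [exists p : k.-tuple T, path e u p && (last u p == v)].

(* shortest-path distance: least k admitting a walk of length k
   (for a connected graph this is attained with k < #|T|) *)
Definition dist (u v : T) : nat :=
  find (fun k => walk_len k u v) (iota 0 #|T|).

(* Unordered pairs are enumerated once via enum_rank u < enum_rank v. *)
Definition base_poly (p q : nat) : {poly int} :=
  \sum_(u : T) \sum_(v : T | (enum_rank u < enum_rank v)%N &&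
      (((deg u == p) && (deg v == q)) || ((deg u == q) && (deg v == p))))
    'X^(dist u v).
End Generic.

(* vertices: inl (i, j) is vertex j of hexagon H_{i+1} (i < n-1), with
   j = 0,1,2,3,4,5 standing for a,b,c,d,e,f; inr 0,1,2,3 are p,q,r,s. *)
Definition LV (n : nat) : finType := ('I_n.-1 * 'I_6 + 'I_4)%type.

Definition Ladj (n : nat) (x y : LV n) : bool :=
  match x, y with
  | inl (i, a), inl (j, b) =>
      ((i == j :> nat) && (b == (a.+1 %% 6)%N :> nat))
      || ((j == i.+1 :> nat) &&
          (((a == 1%N :> nat) && (b == 5%N :> nat))
           || ((a == 2%N :> nat) && (b == 4%N :> nat))))
  | inr s, inr t =>
      ((s == 0%N :> nat) && (t == 1%N :> nat))
      || ((s == 2%N :> nat) && (t == 3%N :> nat))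
  | inr s, inl (j, b) =>
      [|| [&& s == 0%N :> nat, j == 0%N :> nat & b == 5%N :> nat],
          [&& s == 1%N :> nat, j == 0%N :> nat & b == 4%N :> nat],
          [&& s == 2%N :> nat, j == (n - 2)%N :> nat & b == 1%N :> nat]
        | [&& s == 3%N :> nat, j == (n - 2)%N :> nat & b == 2%N :> nat]]
  | inl _, inr _ => false
  end.

Definition Ledge (n : nat) : rel (LV n) := fun x y => Ladj x y || Ladj y x.

(* Main.v *)
Require Import Defs.
From mathcomp Require Import all_boot all_order all_algebra zify ring.
Set Implicit Arguments. Unset Strict Implicit. Unset Printing Implicit Defensive.


Section Walk.
Variable T : finType.
Variable e : rel T.

Lemma walk0 u : walk_len e 0 u u.
Proof. by apply/existsP; exists [tuple]; rewrite /= eqxx. Qed.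

Lemma walkS k u v w : walk_len e k u v -> e v w -> walk_len e k.+1 u w.
Proof.
case/existsP => p /andP[hp /eqP hl] hvw; apply/existsP; exists (rcons_tuple p w).
by rewrite /= rcons_path last_rcons hp hl hvw eqxx.
Qed.

Lemma walkP k u v w : e u w -> walk_len e k w v -> walk_len e k.+1 u v.
Proof.
move=> huw /existsP[p /andP[hp hl]]; apply/existsP; exists [tuple of w :: p].
by rewrite /= huw hp.
Qed.

Lemma walk_lb (g : T -> nat) u v k : g u = 0 ->
  (forall a b, e a b -> g b <= (g a).+1) -> walk_len e k u v -> g v <= k.
Proof.
move=> g0 hg /existsP[p /andP[hp /eqP hl]].
have H : forall (s : seq T) a, path e a s -> g (last a s) <= g a + size s.
  elim=> [|b s IH] a /=; first by rewrite addn0.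
  case/andP=> hab hs; have := IH _ hs; have := hg _ _ hab; lia.
by have := H _ _ hp; rewrite hl g0 size_tuple.
Qed.

Lemma dist_eq u v k : walk_len e k u v -> (forall j, walk_len e j u v -> k <= j) ->
  k < #|T| -> dist e u v = k.
Proof.
move=> hk hmin hT; rewrite /dist.
set P := (fun j => walk_len e j u v).
have hhas : has P (iota 0 #|T|).
  by apply/hasP; exists k => //; rewrite mem_iota.
have hlt := hhas; rewrite has_find size_iota in hlt.
have := nth_find 0 hhas; rewrite nth_iota // add0n => /hmin hle.
case: (ltnP k (find P (iota 0 #|T|))) => h; last by apply/eqP; rewrite eqn_leq hle h.
by have := before_find 0 h; rewrite nth_iota ?add0n; [rewrite /P hk | lia].
Qed.
End Walk.

Section G.
Variable n : nat.
Hypothesis hn : (2 <= n)%N.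

Definition xa (a : nat) : nat :=
  match a with 0 => 2 | 1 => 3 | 2 => 3 | 3 => 2 | _ => 1 end.
Definition X (v : LV n) : nat :=
  match v with inl (i, a) => 3 * i + xa a | inr s => if (s < 2)%N then 0 else 3 * n - 2 end.
Definition Y (v : LV n) : bool :=
  match v with inl (i, a) => [|| a == 2 :> nat, a == 3 :> nat | a == 4 :> nat] | inr s => odd s end.
Definition adjc (x : nat) (y : bool) (x' : nat) (y' : bool) : bool :=
  ((x' == x + 1) || (x == x' + 1)) && (y == y') || [&& x == x', y != y' & x %% 3 != 2].

Lemma E (u v : LV n) : Ledge u v = adjc (X u) (Y u) (X v) (Y v).
Proof.
case: u => [[i [a ha]]|[s hs]]; case: v => [[j [b hb]]|[t ht]];
rewrite /Ledge /Ladj /adjc /X /Y /=.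
- have hi := ltn_ord i; have hj := ltn_ord j.
  case: a ha => [|[|[|[|[|[|a]]]]]] ha //;
  case: b hb => [|[|[|[|[|[|b]]]]]] hb //; simpl;
  apply/idP/idP; lia.
- have hi := ltn_ord i.
  case: a ha => [|[|[|[|[|[|a]]]]]] ha //;
  case: t ht => [|[|[|[|t]]]] ht //; simpl;
  apply/idP/idP; lia.
- have hj := ltn_ord j.
  case: b hb => [|[|[|[|[|[|b]]]]]] hb //;
  case: s hs => [|[|[|[|s]]]] hs //; simpl;
  apply/idP/idP; lia.
- case: s hs => [|[|[|[|s]]]] hs //;
  case: t ht => [|[|[|[|t]]]] ht //; simpl;
  apply/idP/idP; lia.
Qed.

Definition rsel (r : nat) (y : bool) : nat :=
  match r with 0 => if y then 4 else 5 | 1 => if y then 3 else 0 | _ => if y then 2 else 1 end.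

Lemma rsel_lt r y : (rsel r y < 6)%N.
Proof. by case: r => [|[|r]]; case: y. Qed.

Definition phi (x : nat) (y : bool) : LV n :=
  if x == 0 then inr (inord (if y then 1 else 0))
  else if (3 * n - 2 <= x)%N then inr (inord (if y then 3 else 2))
  else match (insub ((x - 1) %/ 3) : option 'I_n.-1) with
       | Some i => inl (i, inord (rsel ((x - 1) %% 3) y))
       | None => inr ord0 end.

Lemma XN (v : LV n) : (X v <= 3 * n - 2)%N.
Proof.
case: v => [[i [a ha]]|[s hs]]; rewrite /X /=.
- have hi := ltn_ord i.
  case: a ha => [|[|[|[|[|[|a]]]]]] ha //= ; lia.
- case: ifP => _; lia.
Qed.

Lemma phiK (v : LV n) : phi (X v) (Y v) = v.
Proof.
case: v => [[i [a ha]]|[s hs]]; rewrite /X /Y /phi /=.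
- have hi := ltn_ord i.
  case: insubP => [k _ hk|hk].
  + have ki : k = i.
      apply: val_inj; rewrite hk {hk}.
      case: a ha => [|[|[|[|[|[|a]]]]]] ha //= ; lia.
    subst k; clear hk.
    case: ifP => h1; first by case: a ha h1 => [|[|[|[|[|[|a]]]]]] ha //= ; lia.
    case: ifP => h2; first by case: a ha h1 h2 => [|[|[|[|[|[|a]]]]]] ha //= ; lia.
    congr (inl (_, _)); apply: val_inj; rewrite /= inordK ?rsel_lt;
    case: a ha {h1 h2} => [|[|[|[|[|[|a]]]]]] ha //=.
    * by have -> : ((3 * i + 2 - 1) %% 3 = 1)%N by lia.
    * by have -> : ((3 * i + 3 - 1) %% 3 = 2)%N by lia.
    * by have -> : ((3 * i + 3 - 1) %% 3 = 2)%N by lia.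
    * by have -> : ((3 * i + 2 - 1) %% 3 = 1)%N by lia.
    * by have -> : ((3 * i + 1 - 1) %% 3 = 0)%N by lia.
    * by have -> : ((3 * i + 1 - 1) %% 3 = 0)%N by lia.
  + exfalso; move: hk; case: a ha => [|[|[|[|[|[|a]]]]]] ha //=; lia.
- case: s hs => [|[|[|[|s]]]] hs //=; repeat (case: ifP => ?; try lia);
  congr inr; apply: val_inj; rewrite /= inordK //.
Qed.


Lemma phiX x y : (x <= 3 * n - 2)%N -> X (phi x y) = x /\ Y (phi x y) = y.
Proof.
move=> hx; rewrite /phi.
case: ifP => h1.
  by rewrite /X /Y /= inordK; case: y => //=; move/eqP: h1.
case: ifP => h2.
  rewrite /X /Y /= inordK; last by case: y.
  by case: y => /=; split => //; lia.
case: insubP => [k _ hk|hk]; last first.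
  exfalso; move: hk; rewrite ltnNge => /negPn; lia.
rewrite /X /Y /= inordK ?rsel_lt // hk.
have hr : ((x - 1) %% 3 < 3)%N by lia.
move: hr; case E3: ((x - 1) %% 3)%N => [|[|[|r]]] //= _; case: y => /=; split => //; lia.
Qed.

Definition dif (a b : nat) : nat := (a - b) + (b - a).

Lemma edge_phi x y x' y' : (x <= 3 * n - 2)%N -> (x' <= 3 * n - 2)%N ->
  Ledge (phi x y) (phi x' y') = adjc x y x' y'.
Proof.
move=> hx hx'; rewrite E; have [-> ->] := phiX y hx; by have [-> ->] := phiX y' hx'.
Qed.

Lemma hwalk k : forall x x' y, (x <= 3 * n - 2)%N -> (x' <= 3 * n - 2)%N ->
  dif x x' = k -> walk_len (@Ledge n) k (phi x y) (phi x' y).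
Proof.
elim: k => [|k IH] x x' y hx hx' hd.
  have -> : x' = x by rewrite /dif in hd; lia.
  exact: walk0.
pose x'' := if (x < x')%N then x'.-1 else x'.+1.
have hx'' : (x'' <= 3 * n - 2)%N by rewrite /x''; case: ifP => hxx; rewrite /dif in hd; lia.
apply: (@walkS _ _ k _ (phi x'' y)).
  apply: IH => //; rewrite /x''; case: ifP => hxx; rewrite /dif in hd *; lia.
rewrite edge_phi // /adjc eqxx andbT /x''; case: ifP => hxx; rewrite /dif in hd; apply/orP; lia.
Qed.

Lemma card_LV : #|LV n| = (n.-1 * 6 + 4)%N.
Proof. by rewrite card_sum card_prod !card_ord. Qed.

Lemma dist_L (u v : LV n) : (X u %% 3 != 2)%N || (X v %% 3 != 2)%N ->
  dist (@Ledge n) u v = (dif (X u) (X v) + (Y u != Y v))%N.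
Proof.
move=> hv.
have hu := XN u; have hvN := XN v.
apply: dist_eq.
- have W : walk_len (@Ledge n) (dif (X u) (X v) + (Y u != Y v))
      (phi (X u) (Y u)) (phi (X v) (Y v)).
    case: eqP => hy /=.
      rewrite addn0 -hy; exact: hwalk.
    rewrite addn1; case/orP: hv => hv.
      apply: (@walkP _ _ _ _ _ (phi (X u) (Y v))); last exact: hwalk.
      rewrite edge_phi // /adjc eqxx /=; apply/orP; right.
      by rewrite hv andbT; apply/eqP.
    apply: (@walkS _ _ _ _ (phi (X v) (Y u))); first exact: hwalk.
    rewrite edge_phi // /adjc eqxx /=; apply/orP; right.
    by rewrite hv andbT; apply/eqP.
  by rewrite !phiK in W.
- move=> j hj; apply: (walk_lb (g := fun w => (dif (X u) (X w) + (Y u != Y w))%N)) hj.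
    by rewrite /dif eqxx; lia.
  move=> a b; rewrite E /adjc.
  have := XN a; have := XN b.
  case: (Y a); case: (Y b); case: (Y u); rewrite /dif /=; lia.
- rewrite card_LV; case: (Y u != Y v); rewrite /dif; lia.
Qed.

Lemma eq_phi (w : LV n) a b : (a <= 3 * n - 2)%N -> (w == phi a b) = (X w == a) && (Y w == b).
Proof.
move=> ha; apply/eqP/andP => [->|[/eqP <- /eqP <-]]; last by rewrite phiK.
by have [-> ->] := phiX b ha.
Qed.

Lemma phi_eq a b c d : (a <= 3 * n - 2)%N -> (c <= 3 * n - 2)%N ->
  (phi a b == phi c d) = (a == c) && (b == d).
Proof. by move=> ha hc; rewrite eq_phi //; have [-> ->] := phiX b ha. Qed.

Definition nbrs (v : LV n) : seq (LV n) :=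
  (if X v != 0 then [:: phi (X v).-1 (Y v)] else [::]) ++
  (if X v != 3 * n - 2 then [:: phi (X v).+1 (Y v)] else [::]) ++
  (if (X v %% 3 != 2)%N then [:: phi (X v) (~~ Y v)] else [::]).

Lemma deg_L (v : LV n) :
  deg (@Ledge n) v = ((X v != 0) + (X v != 3 * n - 2) + (X v %% 3 != 2))%N.
Proof.
have hv := XN v.
have hmem : [pred w | Ledge v w] =i nbrs v.
  move=> w; rewrite inE E /nbrs !mem_cat.
  have hw := XN w.
  case: ifP => h1; case: ifP => h2; case: ifP => h3;
  rewrite ?in_cons ?in_nil ?orbF ?eq_phi /adjc; try lia;
  case: (Y v); case: (Y w); apply/idP/idP; lia.
rewrite /deg (eq_card hmem).
have hu : uniq (nbrs v).
  rewrite /nbrs.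
  case: ifP => h1; case: ifP => h2; case: ifP => h3;
  rewrite /= ?in_cons ?in_nil ?orbF ?andbT //;
  rewrite ?phi_eq; try lia; case: (Y v) => /=; lia.
by rewrite (card_uniqP hu) /nbrs !size_cat; case: ifP; case: ifP; case: ifP.
Qed.

End G.

Import GRing.Theory.
Local Open Scope ring_scope.

Lemma base_ordered (T : finType) (e : rel T) (p q : nat) : p != q ->
  (forall u v, deg e u = p -> deg e v = q -> dist e v u = dist e u v) ->
  base_poly e p q = \sum_(u | deg e u == p) \sum_(v | deg e v == q) 'X^(dist e u v).
Proof.
move=> hpq hsym; rewrite /base_poly.
pose f u v : {poly int} := 'X^(dist e u v).
pose A u v := (deg e u == p) && (deg e v == q).
have step1 : forall u, \sum_(v | (enum_rank u < enum_rank v)%N &&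
      (((deg e u == p) && (deg e v == q)) || ((deg e u == q) && (deg e v == p)))) f u v
   = \sum_v ((if (enum_rank u < enum_rank v)%N && A u v then f u v else 0)
           + (if (enum_rank u < enum_rank v)%N && A v u then f u v else 0)).
  move=> u; rewrite big_mkcond; apply: eq_bigr => v _; rewrite /A.
  case: (enum_rank u < enum_rank v)%N => /=; last by rewrite addr0.
  case: (deg e u =P p) => hu; case: (deg e v =P q) => hv;
  case: (deg e u =P q) => hu'; case: (deg e v =P p) => hv' /=;
  rewrite ?addr0 ?add0r //; exfalso; move/eqP: hpq; congruence.
rewrite (eq_bigr _ (fun u _ => step1 u)).
under eq_bigr do rewrite big_split /=.
rewrite big_split /= [X in _ + X = _]exchange_big /=.
rewrite -big_split /=.
rewrite [RHS]big_mkcond /=; apply: eq_bigr => u _.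
rewrite -big_split /=.
rewrite /A; case: (deg e u =P p) => hu /=; last first.
  by rewrite big1 // => v _; rewrite !andbF addr0.
rewrite [RHS]big_mkcond /=; apply: eq_bigr => v _.
case: (deg e v =P q) => hv /=; rewrite ?andbF ?addr0 //.
rewrite /f (hsym u v) //.
have huv : u != v by apply/eqP => huv; move/eqP: hpq; congruence.
have : enum_rank u != enum_rank v by apply: contra huv => /eqP /enum_rank_inj ->.
rewrite neq_ltn; case/orP => h; rewrite h ltnNge (ltnW h) /= ?addr0 ?add0r //.
Qed.

Notation z := ('X : {poly int}).

Definition G c M : {poly int} := \sum_(i < M) z ^+ (3 * i + c).
Definition A M : {poly int} := \sum_(i < M) (z ^+ (dif 0 (3 * i + 1)) + z ^+ (dif 0 (3 * i + 3))).
Definition C M : {poly int} :=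
  \sum_(i < M) (z ^+ (dif (3 * M + 1) (3 * i + 1)) + z ^+ (dif (3 * M + 1) (3 * i + 3))).
Definition B M : {poly int} := \sum_(j < M) \sum_(i < M)
  (z ^+ (dif (3 * j + 2) (3 * i + 1)) + z ^+ (dif (3 * j + 2) (3 * i + 3))).

Lemma GS c M : G c M.+1 = G c M + z ^+ (3 * M + c).
Proof. by rewrite /G big_ord_recr. Qed.

Lemma zG c M : z * G c M = G c.+1 M.
Proof. rewrite /G big_distrr; apply: eq_bigr => i _; by rewrite addnS exprS. Qed.

Lemma AS M : A M.+1 = A M + z ^+ (3 * M + 1) + z ^+ (3 * M + 3).
Proof. rewrite /A big_ord_recr /= addrA; congr (_ + _ + _); congr (_ ^+ _); rewrite /dif; lia. Qed.

Lemma CS M : C M.+1 = C M + z ^+ (3 * M + 1) + z ^+ (3 * M + 3).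
Proof.
rewrite /C big_ord_recl /= addrC -addrA [X in _ + X]addrC; congr (_ + (_ + _)).
- apply: eq_bigr => i _; rewrite /bump /=; congr (_ ^+ _ + _ ^+ _); rewrite /dif; lia.
- congr (_ ^+ _); rewrite /dif; lia.
- congr (_ ^+ _); rewrite /dif; lia.
Qed.

Lemma BS M : B M.+1 = B M + (z + z) + (G 2 M + G 4 M) + (G 2 M + G 4 M).
Proof.
rewrite /B big_ord_recr /=.
under eq_bigr do rewrite big_ord_recr /=.
rewrite big_split /= big_ord_recr /=.
have e1 : \sum_(i < M) (z ^+ dif (3 * i + 2) (3 * M + 1) + z ^+ dif (3 * i + 2) (3 * M + 3))
   = G 2 M + G 4 M.
  rewrite /G -big_split /= (reindex_inj rev_ord_inj) /=; apply: eq_bigr => i _.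
  have hi := ltn_ord i.
  by congr (_ ^+ _ + _ ^+ _); rewrite /dif; lia.
have e2 : \sum_(i < M) (z ^+ dif (3 * M + 2) (3 * i + 1) + z ^+ dif (3 * M + 2) (3 * i + 3))
   = G 2 M + G 4 M.
  rewrite /G -big_split /= (reindex_inj rev_ord_inj) /=; apply: eq_bigr => i _.
  have hi := ltn_ord i.
  by rewrite addrC; congr (_ ^+ _ + _ ^+ _); rewrite /dif; lia.
rewrite e1 e2.
have -> : dif (3 * M + 2) (3 * M + 1) = 1%N by rewrite /dif; lia.
have -> : dif (3 * M + 2) (3 * M + 3) = 1%N by rewrite /dif; lia.
rewrite expr1; ring.
Qed.

Lemma Gshift c M : G (c + 3) M + z ^+ c = G c M + z ^+ (3 * M + c).
Proof.
elim: M => [|M IH]; first by rewrite /G !big_ord0 muln0 add0n add0r.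
rewrite !GS -addrA [z ^+ (3 * M + (c + 3)) + _]addrC addrA IH.
have -> : (3 * M + (c + 3) = 3 * M.+1 + c)%N by lia.
by rewrite -addrA [_ + z ^+ (3 * M.+1 + c)]addrC addrA.
Qed.

Definition Tn m : {poly int} :=
  (4 * (m + 2))%:R * z
  + \sum_(i < m) (4 * (m + 2 - i))%:R * z ^+ (3 * i + 4)
  + \sum_(i < m.+1) (8 * (m + 1 - i))%:R * z ^+ (3 * i + 2)
  + \sum_(i < m.+1) (4 * (m + 1 - i))%:R * z ^+ (3 * i + 3)
  + 4%:R * z ^+ (3 * m + 4).

Lemma Sstep (a b : nat -> nat) k c m : (forall i, (i < m)%N -> a i = (b i + k)%N) ->
  \sum_(i < m.+1) (a i)%:R * z ^+ (3 * i + c) =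
  \sum_(i < m) (b i)%:R * z ^+ (3 * i + c) + k%:R * G c m + (a m)%:R * z ^+ (3 * m + c).
Proof.
move=> hab; rewrite big_ord_recr /=; congr (_ + _).
rewrite /G big_distrr -big_split /=; apply: eq_bigr => i _.
by rewrite hab // natrD mulrDl.
Qed.

Lemma TS m : Tn m.+1 = Tn m + 4%:R * z + 4%:R * G 4 m + 12%:R * z ^+ (3 * m + 4)
  + 8%:R * G 2 m.+1 + 8%:R * z ^+ (3 * m.+1 + 2) + 4%:R * G 3 m.+1
  + 4%:R * z ^+ (3 * m.+1 + 3) + 4%:R * z ^+ (3 * m.+1 + 4) - 4%:R * z ^+ (3 * m + 4).
Proof.
rewrite /Tn.
rewrite (@Sstep (fun i => 4 * (m.+1 + 2 - i))%N (fun i => 4 * (m + 2 - i))%N 4 4 m); last by move=> i hi; lia.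
rewrite (@Sstep (fun i => 8 * (m.+1 + 1 - i))%N (fun i => 8 * (m + 1 - i))%N 8 2 m.+1); last by move=> i hi; lia.
rewrite (@Sstep (fun i => 4 * (m.+1 + 1 - i))%N (fun i => 4 * (m + 1 - i))%N 4 3 m.+1); last by move=> i hi; lia.
have -> : (4 * (m.+1 + 2 - m))%N = 12%N by lia.
have -> : (8 * (m.+1 + 1 - m.+1))%N = 8%N by lia.
have -> : (4 * (m.+1 + 1 - m.+1))%N = 4%N by lia.
have -> : (4 * (m.+1 + 2))%N = (4 * (m + 2) + 4)%N by lia.
rewrite natrD mulrDl.
ring.
Qed.

Lemma main_id m : (2%:R + 2%:R * z) * (A m.+1 + B m.+1 + C m.+1) = Tn m.
Proof.
elim: m => [|m IH].
  rewrite /A /B /C /Tn !big_ord_recr !big_ord0 /dif /=.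
  rewrite ?addnE ?subnE ?mulnE /=. ring.
rewrite TS -IH AS BS CS.
have e2 : G 2 m.+1 = z * (G 4 m + z ^+ (3 * m + 4)) + z ^+ 2 - z ^+ (3 * m.+1 + 2).
  have h := Gshift 2 m.+1; rewrite -[(2 + 3)%N]/5%N in h.
  by rewrite -GS zG h addrK.
rewrite -(zG 2) e2 (GS 4 m).
rewrite ?mulnS ?exprD.
ring.
Qed.

Lemma split3 (f : nat -> {poly int}) M : \sum_(x < 3 * M + 2) f x =
  f 0%N + \sum_(j < M) (f (3 * j + 1)%N + f (3 * j + 2)%N + f (3 * j + 3)%N) + f (3 * M + 1)%N.
Proof.
elim: M => [|M IH].
  rewrite (_ : (3 * 0 + 2 = 2)%N) // !big_ord_recr !big_ord0 /= add0r addr0. by [].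
have -> : (3 * M.+1 + 2 = (3 * M + 2).+3)%N by lia.
rewrite (big_ord_recr (3 * M + 2).+2) /= (big_ord_recr (3 * M + 2).+1) /= (big_ord_recr (3 * M + 2)) /= IH big_ord_recr /=.
have -> : ((3 * M + 2).+1 = 3 * M + 3)%N by lia.
have -> : ((3 * M + 3).+1 = 3 * M.+1 + 1)%N by lia.
ring.
Qed.

Lemma target_eq m :
    (4 * m.+2)%:R * 'X
    + \sum_(2 <= k < m.+2) (4 * (m.+2 - k + 2))%:R * 'X^(3 * k - 2)
    + \sum_(1 <= k < m.+2) (4 * (2 * m.+2 - 2 * k))%:R * 'X^(3 * k - 1)
    + \sum_(1 <= k < m.+2) (4 * (m.+2 - k))%:R * 'X^(3 * k)
    + 4%:R * 'X^(3 * m.+2 - 2) = Tn m.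
Proof.
rewrite /Tn.
rewrite !big_add1 /= !big_mkord.
have -> : (3 * m.+2 - 2 = 3 * m + 4)%N by lia.
have -> : (4 * m.+2 = 4 * (m + 2))%N by lia.
congr (_ + _ + _ + _ + _).
- apply: eq_bigr => i _; have hi := ltn_ord i; congr (_%:R * 'X^_); lia.
- apply: eq_bigr => i _; have hi := ltn_ord i; congr (_%:R * 'X^_); lia.
- apply: eq_bigr => i _; have hi := ltn_ord i; congr (_%:R * 'X^_); lia.
Qed.


Section Assembly.
Variable n : nat.
Hypothesis hn : (1 < n)%N.

Lemma sum_LV (F : LV n -> {poly int}) :
  \sum_u F u = \sum_(x < (3 * n - 2).+1) (F (phi n x false) + F (phi n x true)).
Proof.
pose h (c : 'I_(3 * n - 2).+1 * bool) := phi n c.1 c.2.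
pose g (v : LV n) : 'I_(3 * n - 2).+1 * bool := (Ordinal (XN hn v : (X v < (3 * n - 2).+1)%N), Y v).
rewrite (reindex h); last first.
  apply: onW_bij; exists g.
  - case=> [x y]; rewrite /g /h /=; have [h1 h2] := phiX hn y (ltn_ord x : (x <= 3 * n - 2)%N).
    by congr (_, _); [apply: val_inj|].
  - by move=> v; rewrite /g /h /= phiK.
rewrite -(pair_big xpredT xpredT (fun x y => F (h (x, y)))) /=.
by apply: eq_bigr => x _; rewrite big_bool /= addrC.
Qed.

Definition P2 (x : nat) : bool := [|| x == 0%N, x == (3 * n - 2)%N | (x %% 3 == 2)%N].

Lemma degphi x y : (x <= 3 * n - 2)%N ->
  (deg (@Ledge n) (phi n x y) == 2%N) = P2 x /\ (deg (@Ledge n) (phi n x y) == 3%N) = ~~ P2 x.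
Proof.
move=> hx; rewrite deg_L //; have [-> _] := phiX hn y hx; rewrite /P2.
split; case: (x =P 0%N) => h1; case: (x =P (3 * n - 2)%N) => h2; case: (_ =P 2%N) => h3 /=; lia.
Qed.

Definition I x : {poly int} :=
  \sum_(x' < (3 * n - 2).+1) (if ~~ P2 x' then z ^+ (dif x x') else 0).

Lemma inner (u : LV n) : deg (@Ledge n) u = 2%N ->
  \sum_(v | deg (@Ledge n) v == 3%N) z ^+ (dist (@Ledge n) u v) = (1 + z) * I (X u).
Proof.
move=> hu; rewrite big_mkcond sum_LV /I big_distrr; apply: eq_bigr => x _ /=.
have hx : (x <= 3 * n - 2)%N := ltn_ord x.
have [_ d0] := degphi false hx; have [_ d1] := degphi true hx.
rewrite d0 d1; case hP: (P2 x) => /=; first by rewrite addr0 mulr0.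
have hxv : (x %% 3 != 2)%N by move: hP; rewrite /P2; case: (_ =P 2%N); rewrite ?orbT.
have hd y : dist (@Ledge n) u (phi n x y) = (dif (X u) x + (Y u != y))%N.
  have [hxy hyy] := phiX hn y hx.
  by rewrite dist_L // hxy ?hyy // hxv orbT.
rewrite !hd; case: (Y u) => /=; rewrite ?addn0 ?addn1 exprSr; ring.
Qed.

Lemma outer :
  \sum_(u | deg (@Ledge n) u == 2%N) \sum_(v | deg (@Ledge n) v == 3%N) z ^+ (dist (@Ledge n) u v)
  = \sum_(x < (3 * n - 2).+1) (if P2 x then (2%:R + 2%:R * z) * I x else 0).
Proof.
rewrite big_mkcond sum_LV; apply: eq_bigr => x _ /=.
have hx : (x <= 3 * n - 2)%N := ltn_ord x.
have [d0 _] := degphi false hx; have [d1 _] := degphi true hx.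
rewrite d0 d1; case hP: (P2 x); last by rewrite addr0.
have [hx0 _] := phiX hn false hx; have [hx1 _] := phiX hn true hx.
rewrite !inner ?hx0 ?hx1; first by ring.
- by apply/eqP; rewrite d1.
- by apply/eqP; rewrite d0.
Qed.

Lemma I_eq x : I x = \sum_(j < n.-1) (z ^+ (dif x (3 * j + 1)) + z ^+ (dif x (3 * j + 3))).
Proof.
rewrite /I.
have -> : ((3 * n - 2).+1 = 3 * n.-1 + 2)%N by lia.
rewrite (split3 (fun k => if ~~ P2 k then z ^+ dif x k else 0)).
have -> : P2 0%N = true by rewrite /P2 eqxx.
have -> : P2 (3 * n.-1 + 1)%N = true by rewrite /P2; apply/orP; right; apply/orP; left; apply/eqP; lia.
rewrite /= add0r addr0; apply: eq_bigr => j _.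
have hj := ltn_ord j.
have -> : P2 (3 * j + 1)%N = false.
  rewrite /P2; case: (_ =P 0%N) => h1; case: (_ =P (3 * n - 2)%N) => h2; case: (_ =P 2%N) => h3 //=; lia.
have -> : P2 (3 * j + 2)%N = true.
  rewrite /P2; apply/orP; right; apply/orP; right; apply/eqP; lia.
have -> : P2 (3 * j + 3)%N = false.
  rewrite /P2; case: (_ =P 0%N) => h1; case: (_ =P (3 * n - 2)%N) => h2; case: (_ =P 2%N) => h3 //=; lia.
by rewrite /= addr0.
Qed.

End Assembly.

Unset Implicit Arguments.

Theorem theorem2p5 (n : nat) (hn : (2 <= n)%N) :
  base_poly (@Ledge n) 2 3 =
    (4 * n)%:R * 'X
    + \sum_(2 <= k < n) (4 * (n - k + 2))%:R * 'X^(3 * k - 2)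
    + \sum_(1 <= k < n) (4 * (2 * n - 2 * k))%:R * 'X^(3 * k - 1)
    + \sum_(1 <= k < n) (4 * (n - k))%:R * 'X^(3 * k)
    + 4%:R * 'X^(3 * n - 2) :> {poly int}.
Proof.
rewrite base_ordered //; last first.
  move=> u v hu hv.
  have h3 : ((X v %% 3)%N != 2%N).
    move: hv; rewrite deg_L //; case: ((X v %% 3)%N =P 2%N) => //= _.
    by case: (X v != 0%N); case: (X v != (3 * n - 2)%N).
  rewrite !dist_L // ?h3 ?orbT //; congr (_ + _)%N; first by rewrite /dif; lia.
  by rewrite eq_sym.
rewrite outer //.
case: n hn => [|[|m]] // hn.
rewrite target_eq -main_id.
have -> : ((3 * m.+2 - 2).+1 = 3 * m.+1 + 2)%N by lia.
rewrite (split3 (fun k => if P2 m.+2 k then (2%:R + 2%:R * z) * I m.+2 k else 0)).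
have -> : P2 m.+2 0%N = true by rewrite /P2 eqxx.
have -> : P2 m.+2 (3 * m.+1 + 1)%N = true by rewrite /P2; apply/orP; right; apply/orP; left; apply/eqP; lia.
have e : forall j : 'I_m.+1, ((if P2 m.+2 (3 * j + 1) then (2%:R + 2%:R * z) * I m.+2 (3 * j + 1) else 0)
   + (if P2 m.+2 (3 * j + 2) then (2%:R + 2%:R * z) * I m.+2 (3 * j + 2) else 0)
   + (if P2 m.+2 (3 * j + 3) then (2%:R + 2%:R * z) * I m.+2 (3 * j + 3) else 0))
   = (2%:R + 2%:R * z) * I m.+2 (3 * j + 2).
  move=> j; have hj := ltn_ord j.
  have -> : P2 m.+2 (3 * j + 1)%N = false.
    rewrite /P2; case: (_ =P 0%N) => h1; case: (_ =P (3 * m.+2 - 2)%N) => h2; case: (_ =P 2%N) => h3 //=; lia.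
  have -> : P2 m.+2 (3 * j + 2)%N = true.
    rewrite /P2; apply/orP; right; apply/orP; right; apply/eqP; lia.
  have -> : P2 m.+2 (3 * j + 3)%N = false.
    rewrite /P2; case: (_ =P 0%N) => h1; case: (_ =P (3 * m.+2 - 2)%N) => h2; case: (_ =P 2%N) => h3 //=; lia.
  by rewrite add0r addr0.
rewrite (eq_bigr _ (fun j _ => e j)) -big_distrr /=.
rewrite !I_eq //=.
have eB : \sum_(i < m.+1) I m.+2 (3 * i + 2) = B m.+1.
  by rewrite /B; apply: eq_bigr => i _; rewrite I_eq.
rewrite eB /A /C.
ring.
Qed.
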